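(* For any $\bar{y}>0$, with $\tilde{x}$ the unique zero of $H$, one has $D(\bar{y},\tilde{x})>0$ and $\mathcal{G}(\bar{y},\tilde{x})>\beta$; consequently the solution $\tilde{F}$ of the ODE $\tilde{F}'(y)=\mathcal{G}(y,\tilde{F}(y))$ with $\tilde{F}(\bar{y})=\tilde{x}$ satisfies $\tilde{F}'(\bar{y})>\beta$.
   Context: Fix constants $\mu\in\mathbb{R}$, $\kappa>0$, $\sigma>0$, $\rho>0$, $\beta>0$, $c\geq0$, $\bar{y}>0$. Let $D_\alpha(x)=\frac{e^{-x^2/4}}{\Gamma(-\alpha)}\int_0^\infty t^{-\alpha-1}e^{-t^2/2-xt}dt$ ($\alpha<0$) and $\psi(x)=e^{\frac{\kappa(x-\mu)^2}{2\sigma^2}}D_{-\rho/\kappa}\big(-\frac{x-\mu}{\sigma}\sqrt{2\kappa}\big)$, the strictly increasing positive solution of $\frac{\sigma^2}{2}u''+\kappa(\mu-x)u'-\rho u=0$. Let $\tilde{R}(x,y)=\frac{\mu\kappa+\rho x-\beta(\rho+2\kappa)y}{\rho(\rho+\kappa)}$. For $k\geq0$ let $Q_k(z)=\psi^{(k)}(z)\psi^{(k+2)}(z)-\psi^{(k+1)}(z)^2$, so $Q_0'(z)=\psi(z)\psi'''(z)-\psi'(z)\psi''(z)$. Define $H(x)=\psi'(x)(c-\tilde{R}(x,\bar{y}))+(\rho+\kappa)^{-1}\psi(x)$, which has a unique real zero $\tilde{x}$. Define $D(y,z)=\psi(z)\big[(\rho+\kappa)(c-\tilde{R}(z,y))Q_1(z)+Q_0'(z)\big]$,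 $N(y,z)=Q_0(z)\Big(\frac{\rho+2\kappa}{\rho}\psi'(z)+(\rho+\kappa)(c-\tilde{R}(z,y))\psi''(z)+\psi'(z)\Big)$, and $\mathcal{G}(y,z)=\beta N(y,z)/D(y,z)$ for $(y,z)\in\mathbb{R}^2$ with $D(y,z)\neq0$. *)

(* Defs.v *)
From Stdlib Require Import Reals Lra.
From Coquelicot Require Import Coquelicot.
Open Scope R_scope.

Definition Gamma_fn (s : R) : R :=
  RInt_gen (fun t => Rpower t (s - 1) * exp (- t))
           (at_right 0) (Rbar_locally p_infty).

(* Parabolic cylinder function, integral representation for alpha < 0:
   D_alpha(x) = e^{-x^2/4}/Gamma(-alpha) int_0^oo t^{-alpha-1} e^{-t^2/2 - x t} dt *)
Definition Dpc (alpha x : R) : R :=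
  exp (- x ^ 2 / 4) / Gamma_fn (- alpha) *
  RInt_gen (fun t => Rpower t (- alpha - 1) * exp (- t ^ 2 / 2 - x * t))
           (at_right 0) (Rbar_locally p_infty).

Definition psi (mu kappa sigma rho : R) (x : R) : R :=
  exp (kappa * (x - mu) ^ 2 / (2 * sigma ^ 2)) *
  Dpc (- rho / kappa) (- ((x - mu) / sigma) * sqrt (2 * kappa)).

Definition dpsi (mu kappa sigma rho : R) (k : nat) (x : R) : R :=
  Derive_n (psi mu kappa sigma rho) k x.

Definition Rtil (mu kappa rho beta : R) (x y : R) : R :=
  (mu * kappa + rho * x - beta * (rho + 2 * kappa) * y) / (rho * (rho + kappa)).

Definition Qk (mu kappa sigma rho : R) (k : nat) (z : R) : R :=
  dpsi mu kappa sigma rho k z * dpsi mu kappa sigma rho (k + 2) z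
  - (dpsi mu kappa sigma rho (k + 1) z) ^ 2.

Definition Q0' (mu kappa sigma rho : R) (z : R) : R :=
  dpsi mu kappa sigma rho 0 z * dpsi mu kappa sigma rho 3 z
  - dpsi mu kappa sigma rho 1 z * dpsi mu kappa sigma rho 2 z.

Definition Hfn (mu kappa sigma rho beta c ybar : R) (x : R) : R :=
  dpsi mu kappa sigma rho 1 x * (c - Rtil mu kappa rho beta x ybar)
  + / (rho + kappa) * psi mu kappa sigma rho x.

Definition Dfn (mu kappa sigma rho beta c : R) (y z : R) : R :=
  psi mu kappa sigma rho z *
  ((rho + kappa) * (c - Rtil mu kappa rho beta z y) * Qk mu kappa sigma rho 1 z
   + Q0' mu kappa sigma rho z).

Definition Nfn (mu kappa sigma rho beta c : R) (y z : R) : R :=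
  Qk mu kappa sigma rho 0 z *
  ((rho + 2 * kappa) / rho * dpsi mu kappa sigma rho 1 z
   + (rho + kappa) * (c - Rtil mu kappa rho beta z y) * dpsi mu kappa sigma rho 2 z
   + dpsi mu kappa sigma rho 1 z).

(* G(y,z) = beta N / D  (used only where D <> 0) *)
Definition Gfn (mu kappa sigma rho beta c : R) (y z : R) : R :=
  beta * Nfn mu kappa sigma rho beta c y z / Dfn mu kappa sigma rho beta c y z.

(* Main.v *)
Require Import Defs.
From Stdlib Require Import Reals Lra FunctionalExtensionality.
From Coquelicot Require Import Coquelicot.
Open Scope R_scope.


Lemma ball_R (x y e : R) : ball x e y <-> Rabs (y - x) < e.
Proof. unfold ball; simpl; unfold AbsRing_ball, abs, minus, plus, opp; simpl. tauto. Qed.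

Lemma exp_le_mono (x y : R) : x <= y -> exp x <= exp y.
Proof. intros [H|H]; [left; apply exp_increasing; auto | subst; lra]. Qed.

Lemma ln_le_sub1 (y : R) : 0 < y -> ln y <= y - 1.
Proof.
  intros Hy. pose proof (exp_ineq1_le (ln y)). rewrite exp_ln in H; lra.
Qed.

Lemma ln_ge0 (t : R) : 1 <= t -> 0 <= ln t.
Proof.
  intros [H|H]; [left; rewrite <- ln_1; apply ln_increasing; lra | subst; rewrite ln_1; lra].
Qed.

Lemma rpow_le_exp (b : R) : exists K, forall t, 1 <= t -> Rpower t b <= exp (t/2 + K).
Proof.
  set (B := Rabs b + 1).
  assert (HB : 0 < B) by (unfold B; pose proof (Rabs_pos b); lra).
  exists (B * ln (2*B)). intros t Ht. unfold Rpower. apply exp_le_mono.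
  pose proof (ln_ge0 t Ht) as H0.
  assert (b * ln t <= B * ln t).
  { apply Rmult_le_compat_r; auto. unfold B. pose proof (Rle_abs b); lra. }
  assert (ln t = ln (2*B) + ln (t / (2*B))).
  { rewrite <- ln_mult; try lra. f_equal. field; lra.
    apply Rdiv_lt_0_compat; lra. }
  pose proof (ln_le_sub1 (t / (2*B))) as H2.
  assert (0 < t / (2*B)) by (apply Rdiv_lt_0_compat; lra).
  specialize (H2 H3).
  assert (B * ln (t / (2*B)) <= B * (t/(2*B) - 1)) by (apply Rmult_le_compat_l; lra).
  assert (B * (t/(2*B) - 1) = t/2 - B) by (field; lra).
  rewrite H1 in H. nra.
Qed.

Lemma quad_bound (m t : R) : - t^2/2 + m * t <= m^2/2.
Proof. pose proof (pow2_ge_0 (t - m)). nra. Qed.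

Lemma exp_bound1 (y : R) : Rabs (exp y - 1) <= Rabs y * exp (Rabs y).
Proof.
  destruct (Rtotal_order y 0) as [Hy|[Hy|Hy]].
  - destruct (MVT_cor2 exp exp y 0 Hy) as [c [Hc1 Hc2]].
    { intros; apply derivable_pt_lim_exp. }
    rewrite exp_0 in Hc1.
    replace (exp y - 1) with (- (exp 0 - exp y)) by (rewrite exp_0; ring).
    rewrite exp_0, Hc1, Rabs_Ropp, Rabs_mult.
    rewrite (Rabs_right (exp c)) by (left; apply exp_pos).
    rewrite (Rabs_left y) by lra. rewrite Rabs_right by lra.
    replace (0 - y) with (-y) by ring.
    rewrite Rmult_comm. apply Rmult_le_compat_l; try lra. apply exp_le_mono; lra.
  - subst. rewrite exp_0, Rabs_R0. replace (1-1) with 0 by ring. rewrite Rabs_R0. lra.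
  - destruct (MVT_cor2 exp exp 0 y Hy) as [c [Hc1 Hc2]].
    { intros; apply derivable_pt_lim_exp. }
    rewrite exp_0 in Hc1. rewrite Hc1, Rabs_mult.
    rewrite (Rabs_right (exp c)) by (left; apply exp_pos).
    rewrite (Rabs_right y) by lra. rewrite Rabs_right by lra.
    replace (y - 0) with y by ring.
    rewrite Rmult_comm. apply Rmult_le_compat_l; try lra. apply exp_le_mono; lra.
Qed.

Lemma exp_bound2 (x : R) : Rabs (exp x - 1 - x) <= x^2 * exp (Rabs x).
Proof.
  set (g := fun y => exp y - y).
  assert (Hd : forall c, derivable_pt_lim g c (exp c - 1)).
  { intros c. unfold g. apply derivable_pt_lim_minus; [apply derivable_pt_lim_exp | apply derivable_pt_lim_id]. }
  assert (key : forall c, Rabs c <= Rabs x -> Rabs (exp c - 1) <= Rabs x * exp (Rabs x)).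
  { intros c Hc. eapply Rle_trans; [apply exp_bound1|].
    apply Rmult_le_compat; auto using Rabs_pos; [left; apply exp_pos| apply exp_le_mono; auto]. }
  assert (Hx2 : x^2 = Rabs x * Rabs x) by (rewrite <- Rabs_mult; rewrite Rabs_right; [ring| nra]).
  destruct (Rtotal_order x 0) as [Hy|[Hy|Hy]].
  - destruct (MVT_cor2 g (fun c => exp c - 1) x 0 Hy) as [c [Hc1 Hc2]]; auto.
    unfold g in Hc1. rewrite exp_0 in Hc1.
    replace (exp x - 1 - x) with (- (1 - 0 - (exp x - x))) by ring.
    rewrite Hc1, Rabs_Ropp, Rabs_mult.
    replace (0 - x) with (-x) by ring. rewrite Rabs_Ropp.
    rewrite Hx2. rewrite Rmult_assoc, (Rmult_comm (Rabs x) (exp _)), <- Rmult_assoc.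
    apply Rmult_le_compat_r; auto using Rabs_pos. apply key.
    rewrite !Rabs_left by lra. lra.
  - subst. rewrite exp_0. replace (1-1-0) with 0 by ring. rewrite Rabs_R0. nra.
  - destruct (MVT_cor2 g (fun c => exp c - 1) 0 x Hy) as [c [Hc1 Hc2]]; auto.
    unfold g in Hc1. rewrite exp_0 in Hc1.
    replace (exp x - 1 - x) with (exp x - x - (1 - 0)) by ring.
    rewrite Hc1, Rabs_mult.
    replace (x - 0) with x by ring.
    rewrite Hx2. rewrite Rmult_assoc, (Rmult_comm (Rabs x) (exp _)), <- Rmult_assoc.
    apply Rmult_le_compat_r; auto using Rabs_pos. apply key.
    rewrite !Rabs_right by lra. lra.
Qed.

Notation F0 := (at_right 0).
Notation Finf := (Rbar_locally p_infty).

Definition cont_pos (f : R -> R) := forall t, 0 < t -> continuous f t.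

Lemma ex_RInt_pos (f : R -> R) u v : cont_pos f -> 0 < u -> 0 < v -> ex_RInt f u v.
Proof.
  intros Hc Hu Hv. apply (ex_RInt_continuous (V:=R_CompleteNormedModule)).
  intros z Hz. apply Hc. pose proof (Rmin_glb_lt u v 0). 
  destruct (Rle_dec u v); [rewrite Rmin_left in Hz | rewrite Rmin_right in Hz]; lra.
Qed.

Lemma RInt_ge0_pos (f : R -> R) u v : cont_pos f -> (forall t, 0 < t -> 0 <= f t) ->
  0 < u <= v -> 0 <= RInt f u v.
Proof.
  intros Hc Hf Huv. apply RInt_ge_0; try lra. apply ex_RInt_pos; auto; lra.
  intros; apply Hf; lra.
Qed.

Lemma gen_pos (f : R -> R) (p q l : R) : cont_pos f -> (forall t, 0 < t -> 0 <= f t) ->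
  0 < p < q -> (forall t, p < t < q -> 0 < f t) ->
  is_RInt_gen f F0 Finf l -> 0 < l.
Proof.
  intros Hc Hf Hpq Hfpq Hl.
  set (m := RInt f p q).
  assert (Hm : 0 < m).
  { apply RInt_gt_0; try lra; auto. intros; apply Hc; lra. }
  destruct (Rlt_or_le l m) as [Hlm|Hlm]; [|lra].
  exfalso.
  assert (He : 0 < m - l) by lra.
  specialize (Hl (ball l (mkposreal _ He)) (locally_ball l (mkposreal _ He))).
  unfold filtermapi in Hl. destruct Hl as [Q R HQ HR HP].
  destruct HQ as [e HQ]. destruct HR as [M HR].
  set (u := Rmin (e/2) (p/2)).
  assert (Hu : 0 < u /\ u < p /\ u < e).
  { unfold u. destruct e as [e epos]; simpl. unfold Rmin; destruct Rle_dec; lra. }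
  set (v := Rmax M q + 1).
  assert (Hv : M < v /\ q < v) by (unfold v; unfold Rmax; destruct Rle_dec; lra).
  destruct (HP u v) as [y [Hy Hb]].
  - apply HQ; [|lra]. apply ball_R. rewrite Rabs_right; lra.
  - apply HR; lra.
  - simpl in Hy. apply (is_RInt_unique (V:=R_CompleteNormedModule)) in Hy. apply ball_R in Hb. simpl in Hb.
    assert (E : RInt f u v = RInt f u p + m + RInt f q v).
    { unfold m. rewrite <- (RInt_Chasles f u p v); try (apply ex_RInt_pos; auto; lra).
      rewrite <- (RInt_Chasles f p q v); try (apply ex_RInt_pos; auto; lra).
      unfold plus; simpl. ring. }
    assert (0 <= RInt f u p) by (apply RInt_ge0_pos; auto; lra).
    assert (0 <= RInt f q v) by (apply RInt_ge0_pos; auto; lra).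
    rewrite <- Hy in Hb. pose proof (Rle_abs (RInt f u v - l)). rewrite E in *. change (Rabs (RInt f u p + m + RInt f q v - l) < m - l) in Hb. lra.
Qed.

Lemma gen_ext (f g : R -> R) l : (forall t, 0 < t -> f t = g t) ->
  is_RInt_gen f F0 Finf l -> is_RInt_gen g F0 Finf l.
Proof.
  intros H. apply is_RInt_gen_ext.
  apply (Filter_prod _ _ _ (fun x => 0 < x) (fun x => 0 < x)).
  - exists (mkposreal 1 Rlt_0_1). intros; auto.
  - exists 0. auto.
  - intros x y Hx Hy z Hz. simpl in Hz. apply H.
    destruct (Rle_dec x y); [rewrite Rmin_left in Hz | rewrite Rmin_right in Hz]; lra.
Qed.

Lemma gen_plus (f g : R -> R) lf lg : is_RInt_gen f F0 Finf lf -> is_RInt_gen g F0 Finf lg ->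
  is_RInt_gen (fun t => f t + g t) F0 Finf (lf + lg).
Proof. intros. apply (is_RInt_gen_plus f g lf lg); auto. Qed.

Lemma gen_scal (f : R -> R) k lf : is_RInt_gen f F0 Finf lf ->
  is_RInt_gen (fun t => k * f t) F0 Finf (k * lf).
Proof. intros. apply (is_RInt_gen_scal f k lf); auto. Qed.

Lemma gen_unique (f : R -> R) l1 l2 : is_RInt_gen f F0 Finf l1 -> is_RInt_gen f F0 Finf l2 -> l1 = l2.
Proof.
  intros H1 H2. apply (is_RInt_gen_unique (V:=R_CompleteNormedModule)) in H1.
  apply (is_RInt_gen_unique (V:=R_CompleteNormedModule)) in H2. congruence.
Qed.

Lemma exd_cont (f : R -> R) x : ex_derive f x -> continuous f x.
Proof. apply (ex_derive_continuous (K:=R_AbsRing) (V:=R_NormedModule)). Qed.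

Lemma rpow_derive (b t : R) : 0 < t -> is_derive (fun x => Rpower x b) t (b * Rpower t (b - 1)).
Proof. intros; apply is_derive_Reals; apply derivable_pt_lim_power; auto. Qed.

Lemma rpow_cont (b t : R) : 0 < t -> continuous (fun x => Rpower x b) t.
Proof. intros; apply (ex_derive_continuous (K:=R_AbsRing) (V:=R_NormedModule)); eexists; apply rpow_derive; auto. Qed.

Lemma rpow_pos (x b : R) : 0 < Rpower x b.
Proof. unfold Rpower; apply exp_pos. Qed.

Lemma RInt_rpow (b x y : R) : -1 < b -> 0 < x -> 0 < y ->
  is_RInt (fun t => Rpower t b) x y ((Rpower y (b+1) - Rpower x (b+1)) / (b+1)).
Proof.
  intros Hb Hx Hy.
  assert (Hmin : 0 < Rmin x y) by (apply Rmin_glb_lt; auto).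
  replace ((Rpower y (b+1) - Rpower x (b+1)) / (b+1)) with
    (minus ((fun t => Rpower t (b+1) / (b+1)) y) ((fun t => Rpower t (b+1) / (b+1)) x))
    by (unfold minus, plus, opp; simpl; field; lra).
  apply (is_RInt_derive (V:=R_CompleteNormedModule) (fun t => Rpower t (b+1) / (b+1)) (fun t => Rpower t b)).
  - intros z Hz. 
    replace (Rpower z b) with (/(b+1) * ((b+1) * Rpower z (b+1-1))).
    + apply is_derive_Reals. unfold Rdiv. 
      apply derivable_pt_lim_ext with (f := fun t => /(b+1) * Rpower t (b+1)).
      { intros; ring. }
      apply derivable_pt_lim_scal. apply derivable_pt_lim_power. lra.
    + replace (b+1-1) with b by ring. field. lra.
  - intros z Hz. apply rpow_cont. lra.
Qed.

Lemma RInt_expm (x y : R) :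
  is_RInt (fun t => exp (-t/2)) x y (2 * (exp (-x/2) - exp (-y/2))).
Proof.
  replace (2 * (exp (-x/2) - exp (-y/2))) with
    (minus ((fun t => -2 * exp (-t/2)) y) ((fun t => -2 * exp (-t/2)) x))
    by (unfold minus, plus, opp; simpl; ring).
  apply (is_RInt_derive (V:=R_CompleteNormedModule) (fun t => -2 * exp (-t/2)) (fun t => exp (-t/2))).
  - intros z Hz. auto_derive; auto. unfold Rdiv; field.
  - intros z Hz. apply exd_cont. auto_derive. auto.
Qed.

Section Exist.
Variables (f : R -> R) (b C : R).
Hypotheses (Hb : -1 < b) (HC : 0 <= C) (Hc : cont_pos f) (Hf : forall t, 0 < t -> 0 <= f t)
  (H0 : forall t, 0 < t <= 1 -> f t <= C * Rpower t b)
  (H1 : forall t, 1 <= t -> f t <= C * exp (-t/2)).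

Lemma left_bound (x y d : R) : 0 < x < d -> 0 < y < d -> d <= 1 ->
  Rabs (RInt f x y) <= C * Rpower d (b+1) / (b+1).
Proof.
  intros.
  assert (Hg : forall x y, 0 < x <= y -> y < d -> Rabs (RInt f x y) <= C * Rpower d (b+1) / (b+1)).
  { clear x y H H2. intros x y Hxy Hyd.
    assert (E : 0 <= RInt f x y) by (apply RInt_ge0_pos; auto).
    rewrite Rabs_right by lra.
    assert (Hle : RInt f x y <= C * ((Rpower y (b+1) - Rpower x (b+1)) / (b+1))).
    { apply (is_RInt_le f (fun t => C * Rpower t b) x y); try lra.
      - apply (RInt_correct (V:=R_CompleteNormedModule)). apply ex_RInt_pos; auto; lra.
      - apply (is_RInt_scal (V:=R_NormedModule) (fun t => Rpower t b) x y C).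
        apply RInt_rpow; lra.
      - intros; apply H0; lra. }
    assert (Rpower y (b+1) <= Rpower d (b+1)) by (apply Rle_Rpower_l; lra).
    pose proof (rpow_pos x (b+1)).
    assert (C * ((Rpower y (b+1) - Rpower x (b+1)) / (b+1)) <= C * Rpower d (b+1) / (b+1)).
    { unfold Rdiv. rewrite <- Rmult_assoc. apply Rmult_le_compat_r.
      left; apply Rinv_0_lt_compat; lra. apply Rmult_le_compat_l; lra. }
    lra. }
  destruct (Rle_dec x y).
  - apply Hg; lra.
  - rewrite <- (opp_RInt_swap (V:=R_CompleteNormedModule)) by (apply ex_RInt_pos; auto; lra).
    unfold opp; simpl. rewrite Rabs_Ropp. apply Hg; lra.
Qed.

Lemma right_bound (x y N : R) : N < x -> N < y -> 1 <= N ->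
  Rabs (RInt f x y) <= 2 * C * exp (-N/2).
Proof.
  intros.
  assert (Hg : forall x y, N < x <= y -> Rabs (RInt f x y) <= 2 * C * exp (-N/2)).
  { clear x y H H2. intros x y Hxy.
    assert (E : 0 <= RInt f x y) by (apply RInt_ge0_pos; auto; lra).
    rewrite Rabs_right by lra.
    assert (Hle : RInt f x y <= C * (2 * (exp (-x/2) - exp (-y/2)))).
    { apply (is_RInt_le f (fun t => C * exp (-t/2)) x y); try lra.
      - apply (RInt_correct (V:=R_CompleteNormedModule)). apply ex_RInt_pos; auto; lra.
      - apply (is_RInt_scal (V:=R_NormedModule) (fun t => exp (-t/2)) x y C).
        apply RInt_expm.
      - intros; apply H1; lra. }
    assert (exp (-x/2) <= exp (-N/2)) by (apply exp_le_mono; lra).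
    pose proof (exp_pos (-y/2)). nra. }
  destruct (Rle_dec x y).
  - apply Hg; lra.
  - rewrite <- (opp_RInt_swap (V:=R_CompleteNormedModule)) by (apply ex_RInt_pos; auto; lra).
    unfold opp; simpl. rewrite Rabs_Ropp. apply Hg; lra.
Qed.

Lemma gen_exists : exists l, is_RInt_gen f F0 Finf l.
Proof.
  set (If := fun ab : R * R => RInt f (fst ab) (snd ab)).
  assert (Hcy : exists y : R_CompleteSpace, filterlim If (filter_prod F0 Finf) (locally y)).
  { apply (filterlim_locally_cauchy (U:=R_CompleteSpace)).
    intros eps. destruct eps as [eps Heps]; simpl.
    set (q := eps * (b+1) / (2 * (C+1))).
    assert (Hq : 0 < q) by (unfold q; apply Rdiv_lt_0_compat; nra).
    set (d := Rmin 1 (Rpower q (/(b+1)))).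
    assert (Hd : 0 < d /\ d <= 1).
    { unfold d. split. apply Rmin_glb_lt; [lra| apply rpow_pos]. apply Rmin_l. }
    assert (Hdq : C * Rpower d (b+1) / (b+1) < eps/2).
    { assert (Rpower d (b+1) <= q).
      { replace q with (Rpower (Rpower q (/(b+1))) (b+1)).
        apply Rle_Rpower_l; [lra|]. split; [lra| apply Rmin_r].
        rewrite Rpower_mult. replace (/(b+1) * (b+1)) with 1 by (field; lra). apply Rpower_1; auto. }
      assert (C * Rpower d (b+1) / (b+1) <= C * q / (b+1)).
      { unfold Rdiv. apply Rmult_le_compat_r. left; apply Rinv_0_lt_compat; lra.
        apply Rmult_le_compat_l; lra. }
      assert (C * q / (b+1) = eps/2 * (C/(C+1))) by (unfold q; field; lra).
      assert (C/(C+1) < 1) by (apply Rmult_lt_reg_r with (C+1); [lra|]; unfold Rdiv; rewrite Rmult_assoc, Rinv_l; lra).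
      nra. }
    set (L := ln (eps / (4 * (C+1)))).
    set (N := 2 + 2 * Rabs L).
    assert (HN : 2 * C * exp (-N/2) < eps/2).
    { assert (exp (-N/2) <= eps / (4*(C+1))).
      { rewrite <- (exp_ln (eps / (4*(C+1)))) by (apply Rdiv_lt_0_compat; lra).
        apply exp_le_mono. unfold N. pose proof (Rle_abs (-L)). rewrite Rabs_Ropp in H. fold L. lra. }
      assert (2 * C * (eps / (4*(C+1))) < eps / 2).
      { replace (2 * C * (eps / (4*(C+1)))) with (eps/2 * (C/(C+1))) by (field; lra).
        assert (C/(C+1) < 1) by (apply Rmult_lt_reg_r with (C+1); [lra|]; unfold Rdiv; rewrite Rmult_assoc, Rinv_l; lra).
        nra. }
      pose proof (exp_pos (-N/2)). nra. }
    assert (HN1 : 1 <= N) by (unfold N; pose proof (Rabs_pos L); lra).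
    exists (fun ab => (0 < fst ab < d) /\ N < snd ab). split.
    - apply (Filter_prod _ _ _ (fun x => 0 < x < d) (fun y => N < y)).
      + exists (mkposreal d (proj1 Hd)). intros y Hy Hy0. apply ball_R in Hy. simpl in Hy.
        assert (Hy' : Rabs (y - 0) < d) by exact Hy.
        rewrite Rminus_0_r, Rabs_right in Hy'; lra.
      + exists N. auto.
      + intros; simpl; auto.
    - intros [u1 v1] [u2 v2] [Hu1 Hv1] [Hu2 Hv2]. simpl in *. apply ball_R. unfold If; simpl.
      assert (E : RInt f u2 v2 = RInt f u2 u1 + RInt f u1 v1 + RInt f v1 v2).
      { rewrite <- (RInt_Chasles f u2 v1 v2); try (apply ex_RInt_pos; auto; lra).
        rewrite <- (RInt_Chasles f u2 u1 v1); try (apply ex_RInt_pos; auto; lra).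
        unfold plus; simpl; ring. }
      rewrite E. replace (RInt f u2 u1 + RInt f u1 v1 + RInt f v1 v2 - RInt f u1 v1)
        with (RInt f u2 u1 + RInt f v1 v2) by ring.
      eapply Rle_lt_trans; [apply Rabs_triang|].
      pose proof (left_bound u2 u1 d ltac:(lra) ltac:(lra) ltac:(lra)).
      pose proof (right_bound v1 v2 N ltac:(lra) ltac:(lra) ltac:(lra)).
      lra. }
  destruct Hcy as [y Hy]. exists y.
  apply (filterlimi_lim_ext_loc If); auto.
  apply (Filter_prod _ _ _ (fun x => 0 < x) (fun x => 0 < x)).
  - exists (mkposreal 1 Rlt_0_1). intros; auto.
  - exists 0. auto.
  - intros u v Hu Hv. unfold If; simpl. apply (RInt_correct (V:=R_CompleteNormedModule)). apply ex_RInt_pos; auto.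
Qed.
End Exist.

Definition W (b s t : R) : R := Rpower t b * exp (- t^2/2 + s * t).
Definition M (b s : R) : R := RInt_gen (W b s) F0 Finf.

Lemma W_pos b s t : 0 < W b s t.
Proof. unfold W. apply Rmult_lt_0_compat; [apply rpow_pos| apply exp_pos]. Qed.

Lemma W_derive b s t : 0 < t ->
  is_derive (W b s) t (b * W (b-1) s t + (s - t) * W b s t).
Proof.
  intros Ht. unfold W.
  apply (is_derive_ext (fun x => Rpower x b * exp (- x^2/2 + s*x))); [reflexivity|].
  replace (b * (Rpower t (b - 1) * exp (- t ^ 2 / 2 + s * t)) +
     (s - t) * (Rpower t b * exp (- t ^ 2 / 2 + s * t))) with
    (b * Rpower t (b-1) * exp (- t ^ 2 / 2 + s * t) + Rpower t b * ((s - t) * exp (- t ^ 2 / 2 + s * t))) by ring.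
  apply (is_derive_mult (fun x => Rpower x b) (fun x => exp (- x^2/2 + s*x))).
  - apply rpow_derive; auto.
  - auto_derive; auto. replace (- (t * (t * 1)) * / 2 + s * t) with (- t ^ 2 / 2 + s * t) by field. field.
  - intros; apply Rmult_comm.
Qed.

Lemma W_cont b s : cont_pos (W b s).
Proof. intros t Ht. apply exd_cont. eexists. apply W_derive; auto. Qed.

Lemma W_shift b s t : 0 < t -> t * W b s t = W (b+1) s t.
Proof.
  intros Ht. unfold W. rewrite Rpower_plus, Rpower_1 by auto. ring.
Qed.

Lemma W_exp b s h t : W b (s+h) t = W b s t * exp (h*t).
Proof. unfold W. rewrite Rmult_assoc, <- exp_plus. f_equal. f_equal. ring. Qed.

Lemma W_ex b s : -1 < b -> exists l, is_RInt_gen (W b s) F0 Finf l.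
Proof.
  intros Hb. destruct (rpow_le_exp b) as [K HK].
  apply (gen_exists (W b s) b (Rmax (exp (Rabs s)) (exp (K + (s+1)^2/2)))); auto.
  - apply Rle_trans with (exp (Rabs s)); [left; apply exp_pos| apply Rmax_l].
  - apply W_cont.
  - intros; left; apply W_pos.
  - intros t Ht. unfold W. rewrite Rmult_comm. apply Rmult_le_compat_r; [left; apply rpow_pos|].
    apply Rle_trans with (exp (Rabs s)); [|apply Rmax_l]. apply exp_le_mono.
    pose proof (Rle_abs s). pose proof (Rabs_pos s). 
    assert (s * t <= Rabs s) by (destruct (Rle_dec 0 s); nra). nra.
  - intros t Ht. unfold W.
    apply Rle_trans with (exp (K + (s+1)^2/2) * exp (-t/2)); [| apply Rmult_le_compat_r; [left; apply exp_pos| apply Rmax_r]].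
    apply Rle_trans with (exp (t/2 + K) * exp (- t ^ 2 / 2 + s * t)).
    + apply Rmult_le_compat_r; [left; apply exp_pos| apply HK; auto].
    + rewrite <- !exp_plus. apply exp_le_mono. pose proof (quad_bound (s+1) t). lra.
Qed.

Lemma M_is b s : -1 < b -> is_RInt_gen (W b s) F0 Finf (M b s).
Proof.
  intros Hb. destruct (W_ex b s Hb) as [l Hl]. unfold M.
  apply (is_RInt_gen_unique (V:=R_CompleteNormedModule)) in Hl as E. rewrite E. auto.
Qed.

Lemma M_pos b s : -1 < b -> 0 < M b s.
Proof.
  intros Hb. apply (gen_pos (W b s) 1 2 (M b s)); auto using W_cont, M_is.
  intros; left; apply W_pos. lra. intros; apply W_pos.
Qed.

Lemma lin3 f1 f2 f3 l1 l2 l3 c1 c2 c3 :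
  is_RInt_gen f1 F0 Finf l1 -> is_RInt_gen f2 F0 Finf l2 -> is_RInt_gen f3 F0 Finf l3 ->
  is_RInt_gen (fun t => c1 * f1 t + c2 * f2 t + c3 * f3 t) F0 Finf (c1*l1 + c2*l2 + c3*l3).
Proof.
  intros H1 H2 H3.
  apply gen_plus; [apply gen_plus|]; apply gen_scal; auto.
Qed.

Lemma rem_bound b s h : -1 < b -> Rabs h <= 1 ->
  Rabs (M b (s+h) - M b s - h * M (b+1) s) <= h^2 * M (b+2) (s+1).
Proof.
  intros Hb Hh.
  assert (HI : is_RInt_gen (fun t => 1 * W b (s+h) t + (-1) * W b s t + (-h) * W (b+1) s t) F0 Finf
     (1 * M b (s+h) + (-1) * M b s + (-h) * M (b+1) s)).
  { apply lin3; apply M_is; lra. }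
  replace (M b (s+h) - M b s - h * M (b+1) s) with (1 * M b (s+h) + (-1) * M b s + (-h) * M (b+1) s) by ring.
  assert (HJ : is_RInt_gen (fun t => h^2 * W (b+2) (s+1) t) F0 Finf (h^2 * M (b+2) (s+1))).
  { apply gen_scal. apply M_is. lra. }
  refine (RInt_gen_norm (V:=R_CompleteNormedModule) _ _ _ _ _ _ HI HJ).
  - apply (Filter_prod _ _ _ (fun x => 0 < x < 1) (fun x => 1 < x)).
    + exists (mkposreal 1 Rlt_0_1). intros y Hy Hy0.
      assert (Hy' : Rabs (y - 0) < 1) by exact Hy. rewrite Rminus_0_r, Rabs_right in Hy'; lra.
    + exists 1. auto.
    + intros; simpl; lra.
  - apply (Filter_prod _ _ _ (fun x => 0 < x) (fun x => True)).
    + exists (mkposreal 1 Rlt_0_1). intros; auto.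
    + exists 0. auto.
    + intros u v Hu _ t Ht. simpl in Ht.
      assert (Htp : 0 < t) by lra.
      change (Rabs (1 * W b (s + h) t + -1 * W b s t + - h * W (b + 1) s t) <= h ^ 2 * W (b + 2) (s + 1) t).
      rewrite W_exp, <- (W_shift b s t Htp).
      replace (b+2) with (b+1+1) by ring. rewrite <- (W_shift (b+1) _ t Htp), <- (W_shift b _ t Htp).
      rewrite W_exp.
      replace (1 * (W b s t * exp (h * t)) + -1 * W b s t + - h * (t * W b s t))
        with (W b s t * (exp (h*t) - 1 - h*t)) by ring.
      rewrite Rabs_mult, (Rabs_right (W b s t)) by (left; apply W_pos).
      pose proof (W_pos b s t).
      replace (h ^ 2 * (t * (t * (W b s t * exp (1 * t))))) with (W b s t * ((h*t)^2 * exp t))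
        by (rewrite Rmult_1_l; ring).
      apply Rmult_le_compat_l; [lra|].
      eapply Rle_trans; [apply exp_bound2|].
      apply Rmult_le_compat_l; [apply pow2_ge_0|]. apply exp_le_mono.
      rewrite Rabs_mult, (Rabs_right t) by lra. nra.
Qed.

Lemma M_deriv b s : -1 < b -> is_derive (M b) s (M (b+1) s).
Proof.
  intros Hb. apply is_derive_Reals. intros eps Heps.
  set (B := M (b+2) (s+1)).
  assert (HB : 0 < B) by (apply M_pos; lra).
  assert (Hd : 0 < Rmin 1 (eps / (B+1))) by (apply Rmin_glb_lt; [lra| apply Rdiv_lt_0_compat; lra]).
  exists (mkposreal _ Hd). intros h Hh0 Hh. simpl in Hh.
  assert (Hh1 : Rabs h <= 1) by (pose proof (Rmin_l 1 (eps/(B+1))); lra).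
  assert (Hh2 : Rabs h < eps / (B+1)) by (pose proof (Rmin_r 1 (eps/(B+1))); lra).
  pose proof (rem_bound b s h Hb Hh1) as Hr. fold B in Hr.
  replace ((M b (s + h) - M b s) / h - M (b + 1) s) with ((M b (s+h) - M b s - h * M (b+1) s) / h)
    by (field; auto).
  unfold Rdiv. rewrite Rabs_mult, Rabs_inv.
  assert (Habs : 0 < Rabs h) by (apply Rabs_pos_lt; auto).
  apply Rmult_lt_reg_r with (Rabs h); auto.
  rewrite Rmult_assoc, Rinv_l by lra. rewrite Rmult_1_r.
  assert (h^2 = Rabs h * Rabs h) by (rewrite <- Rabs_mult, Rabs_right; [ring| nra]).
  assert (Rabs h * B < eps).
  { apply Rle_lt_trans with (eps/(B+1) * B). apply Rmult_le_compat_r; lra.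
    replace (eps / (B+1) * B) with (eps * (B/(B+1))) by (field; lra).
    assert (B/(B+1) < 1) by (apply Rmult_lt_reg_r with (B+1); [lra|]; unfold Rdiv; rewrite Rmult_assoc, Rinv_l; lra).
    nra. }
  nra.
Qed.

Lemma cont_plusR (f g : R -> R) x : continuous f x -> continuous g x -> continuous (fun t => f t + g t) x.
Proof. intros; apply (continuous_plus (V:=R_NormedModule) f g x); auto. Qed.
Lemma cont_multR (f g : R -> R) x : continuous f x -> continuous g x -> continuous (fun t => f t * g t) x.
Proof. intros; apply (continuous_mult (K:=R_AbsRing) f g x); auto. Qed.

Lemma W_bounds b s : exists C, 0 <= C /\ (forall t, 0 < t <= 1 -> W b s t <= C * Rpower t b)
  /\ (forall t, 1 <= t -> W b s t <= C * exp (-t/2)).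
Proof.
  destruct (rpow_le_exp b) as [K HK].
  exists (Rmax (exp (Rabs s)) (exp (K + (s+1)^2/2))). split; [|split].
  - apply Rle_trans with (exp (Rabs s)); [left; apply exp_pos| apply Rmax_l].
  - intros t Ht. unfold W. rewrite Rmult_comm. apply Rmult_le_compat_r; [left; apply rpow_pos|].
    apply Rle_trans with (exp (Rabs s)); [|apply Rmax_l]. apply exp_le_mono.
    pose proof (Rle_abs s). pose proof (Rabs_pos s).
    assert (s * t <= Rabs s) by (destruct (Rle_dec 0 s); nra). nra.
  - intros t Ht. unfold W.
    apply Rle_trans with (exp (K + (s+1)^2/2) * exp (-t/2)); [| apply Rmult_le_compat_r; [left; apply exp_pos| apply Rmax_r]].
    apply Rle_trans with (exp (t/2 + K) * exp (- t ^ 2 / 2 + s * t)).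
    + apply Rmult_le_compat_r; [left; apply exp_pos| apply HK; auto].
    + rewrite <- !exp_plus. apply exp_le_mono. pose proof (quad_bound (s+1) t). lra.
Qed.

Lemma W_lim0 b s : 0 < b -> filterlim (W b s) F0 (locally 0).
Proof.
  intros Hb. destruct (W_bounds b s) as [C [HC [H0 _]]].
  apply (filterlim_locally (F:=F0)). intros [eps Heps]. simpl.
  set (q := eps / (C+1)).
  assert (Hq : 0 < q) by (unfold q; apply Rdiv_lt_0_compat; lra).
  set (d := Rmin 1 (Rpower q (/b))).
  assert (Hd : 0 < d) by (apply Rmin_glb_lt; [lra| apply rpow_pos]).
  exists (mkposreal d Hd). intros y Hy Hy0. simpl in Hy.
  assert (Hy' : Rabs (y - 0) < d) by exact Hy. rewrite Rminus_0_r, Rabs_right in Hy' by lra.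
  apply ball_R. rewrite Rminus_0_r. pose proof (W_pos b s y). rewrite Rabs_right by lra.
  assert (Hd1 : d <= 1) by apply Rmin_l.
  assert (Hd2 : d <= Rpower q (/b)) by apply Rmin_r.
  assert (y <= 1) by lra.
  assert (Rpower y b < q).
  { replace q with (Rpower (Rpower q (/b)) b).
    apply Rlt_Rpower_l; auto. split; lra.
    rewrite Rpower_mult. replace (/b * b) with 1 by (field; lra). apply Rpower_1; auto. }
  specialize (H0 y ltac:(lra)).
  assert (C * Rpower y b <= C * q) by (apply Rmult_le_compat_l; lra).
  assert (C * q < eps).
  { unfold q. replace (C * (eps / (C+1))) with (eps * (C/(C+1))) by (field; lra).
    assert (C/(C+1) < 1) by (apply Rmult_lt_reg_r with (C+1); [lra|]; unfold Rdiv; rewrite Rmult_assoc, Rinv_l; lra).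
    nra. }
  lra.
Qed.

Lemma W_liminf b s : filterlim (W b s) Finf (locally 0).
Proof.
  destruct (W_bounds b s) as [C [HC [_ H1]]].
  apply (filterlim_locally (F:=Finf)). intros [eps Heps]. simpl.
  set (L := ln (eps / (C+1))).
  exists (2 + 2 * Rabs L). intros t Ht.
  apply ball_R. rewrite Rminus_0_r. pose proof (W_pos b s t). rewrite Rabs_right by lra.
  pose proof (Rabs_pos L).
  specialize (H1 t ltac:(lra)).
  assert (exp (-t/2) <= eps / (C+1)).
  { rewrite <- (exp_ln (eps / (C+1))) by (apply Rdiv_lt_0_compat; lra).
    apply exp_le_mono. pose proof (Rle_abs (-L)). rewrite Rabs_Ropp in H2. fold L. lra. }
  assert (C * exp (-t/2) <= C * (eps/(C+1))) by (apply Rmult_le_compat_l; lra).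
  assert (C * (eps/(C+1)) < eps).
  { replace (C * (eps / (C+1))) with (eps * (C/(C+1))) by (field; lra).
    assert (C/(C+1) < 1) by (apply Rmult_lt_reg_r with (C+1); [lra|]; unfold Rdiv; rewrite Rmult_assoc, Rinv_l; lra).
    nra. }
  lra.
Qed.

Lemma M_ibp b s : 0 < b -> b * M (b-1) s = M (b+1) s - s * M b s.
Proof.
  intros Hb.
  set (g := fun t => b * W (b-1) s t + (s - t) * W b s t).
  assert (HD : forall t, 0 < t -> Derive (W b s) t = g t).
  { intros t Ht. apply is_derive_unique. apply W_derive; auto. }
  assert (Hpos2 : filter_prod F0 Finf (fun ab : R*R => 0 < Rmin (fst ab) (snd ab))).
  { apply (Filter_prod _ _ _ (fun x => 0 < x) (fun x => 0 < x)).
    + exists (mkposreal 1 Rlt_0_1). intros; auto.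
    + exists 0. auto.
    + intros; simpl; apply Rmin_glb_lt; auto. }
  assert (HI : is_RInt_gen (Derive (W b s)) F0 Finf (0 - 0)).
  { apply is_RInt_gen_Derive.
    - eapply filter_imp; [|exact Hpos2]. intros [u v] Huv x Hx. simpl in *.
      eexists. apply W_derive. lra.
    - eapply filter_imp; [|exact Hpos2]. intros [u v] Huv x Hx. simpl in *.
      apply (continuous_ext_loc _ g).
      + assert (Hx0 : 0 < x) by lra. exists (mkposreal x Hx0). intros y Hy.
        assert (Hy' : Rabs (y - x) < x) by exact Hy.
        symmetry. apply HD. apply Rabs_def2 in Hy'. lra.
      + unfold g. apply cont_plusR; apply cont_multR.
        * apply continuous_const.
        * apply W_cont; lra.
        * apply (cont_plusR (fun _ => s) (fun t => - t)). apply continuous_const.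
          apply (continuous_opp (V:=R_NormedModule) (fun t => t)). apply continuous_id.
        * apply W_cont; lra.
    - apply W_lim0; auto.
    - apply W_liminf. }
  apply (gen_ext _ g) in HI; [| intros; apply HD; auto].
  assert (HJ := lin3 (W (b-1) s) (W b s) (W (b+1) s) _ _ _ b s (-1)
     (M_is (b-1) s ltac:(lra)) (M_is b s ltac:(lra)) (M_is (b+1) s ltac:(lra))).
  apply (gen_ext _ g) in HJ.
  - pose proof (gen_unique _ _ _ HI HJ). lra.
  - intros t Ht. unfold g. rewrite <- (W_shift b s t Ht). ring.
Qed.

Lemma M_cs b s : -1 < b -> (M (b+1) s)^2 < M b s * M (b+2) s.
Proof.
  intros Hb.
  pose proof (M_pos b s Hb) as H0.
  set (lam := M (b+1) s / M b s).
  set (f := fun t => W b s t * ((t - lam) * (t - lam))).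
  assert (HJ := lin3 (W (b+2) s) (W (b+1) s) (W b s) _ _ _ 1 (-2*lam) (lam*lam)
     (M_is (b+2) s ltac:(lra)) (M_is (b+1) s ltac:(lra)) (M_is b s ltac:(lra))).
  apply (gen_ext _ f) in HJ.
  - apply (gen_pos f (Rabs lam + 1) (Rabs lam + 2)) in HJ.
    + unfold lam in HJ.
      assert (E : 1 * M (b + 2) s + -2 * (M (b + 1) s / M b s) * M (b + 1) s +
        M (b + 1) s / M b s * (M (b + 1) s / M b s) * M b s
        = (M b s * M (b+2) s - (M (b+1) s)^2) / M b s) by (field; lra).
      rewrite E in HJ.
      apply Rmult_lt_compat_r with (r := M b s) in HJ; auto.
      unfold Rdiv in HJ. rewrite Rmult_0_l, Rmult_assoc, Rinv_l, Rmult_1_r in HJ; lra.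
    + intros t Ht. unfold f. apply cont_multR. apply W_cont; auto.
      apply cont_multR; apply (cont_plusR (fun t => t) (fun _ => - lam)); 
        (apply continuous_id || apply continuous_const).
    + intros t Ht. unfold f. pose proof (W_pos b s t). pose proof (pow2_ge_0 (t - lam)).
      apply Rmult_le_pos; nra.
    + pose proof (Rabs_pos lam); lra.
    + intros t Ht. unfold f. pose proof (W_pos b s t). pose proof (Rle_abs lam).
      apply Rmult_lt_0_compat; auto. assert (0 < t - lam) by lra. nra.
  - intros t Ht. unfold f.
    replace (b+2) with (b+1+1) by ring. rewrite <- (W_shift (b+1) s t Ht), <- (W_shift b s t Ht).
    ring.
Qed.

Lemma Gamma_pos a : 0 < a -> 0 < Gamma_fn a.
Proof.
  intros Ha. set (g := fun t => Rpower t (a - 1) * exp (- t)).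
  assert (Hc : cont_pos g).
  { intros t Ht. unfold g. apply cont_multR. apply rpow_cont; auto.
    apply exd_cont. auto_derive. auto. }
  assert (Hg : forall t, 0 < t -> 0 < g t).
  { intros; unfold g; apply Rmult_lt_0_compat; [apply rpow_pos| apply exp_pos]. }
  destruct (rpow_le_exp (a-1)) as [K HK].
  destruct (gen_exists g (a-1) (Rmax 1 (exp K))) as [l Hl]; auto.
  - lra.
  - apply Rle_trans with 1; [lra| apply Rmax_l].
  - intros; left; auto.
  - intros t Ht. unfold g. rewrite Rmult_comm.
    apply Rmult_le_compat; [left; apply exp_pos| left; apply rpow_pos| |lra].
    apply Rle_trans with 1; [|apply Rmax_l]. rewrite <- exp_0. apply exp_le_mono. lra.
  - intros t Ht. unfold g.
    apply Rle_trans with (exp (t/2 + K) * exp (-t)).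
    + apply Rmult_le_compat_r; [left; apply exp_pos| apply HK; auto].
    + rewrite <- exp_plus. replace (t/2 + K + -t) with (K + -t/2) by field.
      rewrite exp_plus. apply Rmult_le_compat_r; [left; apply exp_pos| apply Rmax_r].
  - unfold Gamma_fn. fold g.
    apply (is_RInt_gen_unique (V:=R_CompleteNormedModule)) in Hl as E. rewrite E.
    apply (gen_pos g 1 2 l); auto. intros; left; auto. lra. intros; apply Hg; lra.
Qed.

Section Psi.
Variables (mu kappa sigma rho : R).
Hypotheses (Hk : 0 < kappa) (Hs : 0 < sigma) (Hr : 0 < rho).

Definition aa := rho / kappa.
Definition c0 := sqrt (2 * kappa) / sigma.
Definition GG := Gamma_fn aa.

Definition P (k : nat) (x : R) : R := c0 ^ k * M (aa - 1 + INR k) (c0 * (x - mu)) / GG.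

Lemma aa_pos : 0 < aa.
Proof. unfold aa; apply Rdiv_lt_0_compat; auto. Qed.

Lemma psi_P x : psi mu kappa sigma rho x = P 0 x.
Proof.
  unfold psi, Dpc, P. change (INR 0) with 0. rewrite Rplus_0_r, pow_O.
  replace (- (- rho / kappa)) with aa by (unfold aa; field; lra).
  set (z := - ((x - mu) / sigma) * sqrt (2 * kappa)).
  assert (Hsq : sqrt (2*kappa) * sqrt (2*kappa) = 2 * kappa) by (apply sqrt_sqrt; lra).
  assert (Ef : (fun t => Rpower t (aa - 1) * exp (- t ^ 2 / 2 - z * t)) = W (aa - 1) (c0 * (x - mu))).
  { apply functional_extensionality. intros t. unfold W. f_equal. f_equal.
    unfold z, c0. field. lra. }
  rewrite Ef. fold (M (aa - 1) (c0 * (x - mu))). unfold GG.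
  assert (Ee : exp (kappa * (x - mu) ^ 2 / (2 * sigma ^ 2)) * exp (- z ^ 2 / 4) = 1).
  { rewrite <- exp_plus, <- exp_0. f_equal. unfold z.
    replace ((- ((x - mu) / sigma) * sqrt (2 * kappa)) ^ 2) with (((x-mu)/sigma)^2 * (sqrt (2*kappa) * sqrt (2*kappa))) by ring.
    rewrite Hsq. field. lra. }
  transitivity ((exp (kappa * (x - mu) ^ 2 / (2 * sigma ^ 2)) * exp (- z ^ 2 / 4)) * (M (aa - 1) (c0 * (x - mu)) / Gamma_fn aa)).
  - unfold Rdiv. rewrite !Rmult_assoc. f_equal. f_equal. apply Rmult_comm.
  - rewrite Ee. unfold GG, Rdiv. ring.
Qed.

Lemma P_deriv k x : is_derive (P k) x (P (S k) x).
Proof.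
  unfold P. rewrite S_INR.
  assert (Hb : -1 < aa - 1 + INR k) by (pose proof aa_pos; pose proof (pos_INR k); lra).
  pose proof (M_deriv _ (c0 * (x - mu)) Hb) as HM.
  apply is_derive_Reals in HM. apply is_derive_Reals.
  apply derivable_pt_lim_ext with (f := fun y => (c0 ^ k / GG) * (M (aa - 1 + INR k) (c0 * (y - mu)))).
  { intros; unfold Rdiv; ring. }
  change (c0 ^ S k) with (c0 * c0 ^ k). rewrite <- Rplus_assoc.
  replace (c0 * c0 ^ k * M (aa - 1 + INR k + 1) (c0 * (x - mu)) / GG)
    with ((c0 ^ k / GG) * (M (aa - 1 + INR k + 1) (c0 * (x - mu)) * c0))
    by (unfold Rdiv; ring).
  apply derivable_pt_lim_scal.
  apply (derivable_pt_lim_comp (fun y => c0 * (y - mu)) (M (aa - 1 + INR k))); auto.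
  apply is_derive_Reals. auto_derive; auto. ring.
Qed.

Lemma Dn_P k : Derive_n (psi mu kappa sigma rho) k = P k.
Proof.
  induction k as [|k IH].
  - apply functional_extensionality; intros x; simpl. apply psi_P.
  - apply functional_extensionality; intros x. simpl. rewrite IH.
    apply is_derive_unique. apply P_deriv.
Qed.

Lemma dpsi_P k x : dpsi mu kappa sigma rho k x = P k x.
Proof. unfold dpsi. rewrite Dn_P. reflexivity. Qed.

End Psi.

Lemma final_alg (p0 p1 p2 p3 T rho kappa beta : R) :
 0 < rho -> 0 < kappa -> 0 < beta -> 0 < p0 -> 0 < p1 -> 0 < p2 -> p1^2 < p0*p2 ->
 rho*(p0*p2) < (rho+kappa)*p1^2 ->
 p1 * T + /(rho+kappa) * p0 = 0 ->
 0 < p0 * ((rho+kappa)*T*(p1*p3 - p2^2) + (p0*p3 - p1*p2)) /\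
 beta < beta * ((p0*p2 - p1^2) * ((rho + 2*kappa)/rho * p1 + (rho+kappa)*T*p2 + p1)) /
   (p0 * ((rho+kappa)*T*(p1*p3 - p2^2) + (p0*p3 - p1*p2))).
Proof.
  intros Hr Hk Hb H0 H1 H2 HQ Hkey HT.
  assert (ET : T = - p0 / ((rho+kappa) * p1)).
  { apply Rmult_eq_reg_l with p1; [|lra].
    replace (p1 * (- p0 / ((rho+kappa)*p1))) with (- / (rho+kappa) * p0) by (field; lra). lra. }
  subst T.
  set (Q := p0*p2 - p1^2).
  assert (HQ' : 0 < Q) by (unfold Q; lra).
  assert (ED : p0 * ((rho+kappa)*(- p0 / ((rho+kappa) * p1))*(p1*p3 - p2^2) + (p0*p3 - p1*p2))
     = p0 * p2 * Q / p1) by (unfold Q; field; lra).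
  assert (EN : Q * ((rho + 2*kappa)/rho * p1 + (rho+kappa)*(- p0 / ((rho+kappa) * p1))*p2 + p1)
     = Q * ((2*rho+2*kappa)/rho * p1^2 - p0*p2) / p1) by (unfold Q; field; lra).
  rewrite ED, EN.
  assert (HD : 0 < p0 * p2 * Q / p1).
  { apply Rdiv_lt_0_compat; auto. apply Rmult_lt_0_compat; auto. apply Rmult_lt_0_compat; auto. }
  split; auto.
  assert (HND : p0 * p2 * Q / p1 < Q * ((2*rho+2*kappa)/rho * p1^2 - p0*p2) / p1).
  { unfold Rdiv. apply Rmult_lt_compat_r. apply Rinv_0_lt_compat; auto.
    rewrite (Rmult_comm Q). apply Rmult_lt_compat_r; auto.
    assert ((2*rho+2*kappa) * / rho * p1^2 = 2 * ((rho+kappa)*p1^2) / rho) by (field; lra).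
    rewrite H.
    replace (2 * ((rho+kappa)*p1^2)/rho) with (2*(p0*p2) + 2*((rho+kappa)*p1^2 - rho*(p0*p2))/rho) by (field; lra).
    assert (0 < 2*((rho+kappa)*p1^2 - rho*(p0*p2))/rho) by (apply Rdiv_lt_0_compat; lra).
    nra. }
  set (D := p0 * p2 * Q / p1) in *. set (N := Q * ((2*rho+2*kappa)/rho * p1^2 - p0*p2) / p1) in *.
  apply Rmult_lt_reg_r with D; auto.
  replace (beta * N / D * D) with (beta * N) by (field; lra).
  nra.
Qed.

Theorem lemma4p3 (mu kappa sigma rho beta c ybar xt : R) :
  0 < kappa -> 0 < sigma -> 0 < rho -> 0 < beta -> 0 <= c -> 0 < ybar ->
  Hfn mu kappa sigma rho beta c ybar xt = 0 ->
  (forall x, Hfn mu kappa sigma rho beta c ybar x = 0 -> x = xt) ->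
  0 < Dfn mu kappa sigma rho beta c ybar xt /\
  beta < Gfn mu kappa sigma rho beta c ybar xt /\
  (forall (F : R -> R) (a b : R), a < ybar < b ->
     F ybar = xt ->
     (forall y, a < y < b -> is_derive F y (Gfn mu kappa sigma rho beta c y (F y))) ->
     beta < Derive F ybar).
Proof.
  intros Hk Hs Hr Hb Hc Hy HH _.
  assert (Main : 0 < Dfn mu kappa sigma rho beta c ybar xt /\
                 beta < Gfn mu kappa sigma rho beta c ybar xt).
  { unfold Gfn, Nfn, Dfn, Qk, Q0', Hfn in *.
    rewrite !(dpsi_P mu kappa sigma rho Hk Hs Hr) in *.
    rewrite !(psi_P mu kappa sigma rho Hk Hs) in *.
    set (a := aa kappa rho) in *.
    set (s := c0 kappa sigma * (xt - mu)).
    pose proof (aa_pos kappa rho Hk Hr) as Ha. fold a in Ha.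
    assert (Hc0 : 0 < c0 kappa sigma).
    { unfold c0. apply Rdiv_lt_0_compat; auto. apply sqrt_lt_R0. lra. }
    assert (HG : 0 < GG kappa rho) by (apply Gamma_pos; auto).
    cbn [Nat.add] in *.
    set (p0 := P mu kappa sigma rho 0 xt) in *.
    set (p1 := P mu kappa sigma rho 1 xt) in *.
    set (p2 := P mu kappa sigma rho 2 xt) in *.
    set (p3 := P mu kappa sigma rho 3 xt) in *.
    set (C := c0 kappa sigma) in *. set (G := GG kappa rho) in *.
    assert (Ep0 : p0 = M (a-1) s / G) by (unfold p0, P; fold a C s G; change (INR 0) with 0; rewrite Rplus_0_r; simpl; unfold Rdiv; ring).
    assert (Ep1 : p1 = C * M (a-1+1) s / G) by (unfold p1, P; fold a C s G; change (INR 1) with 1; simpl; unfold Rdiv; ring).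
    assert (Ep2 : p2 = C^2 * M (a-1+2) s / G) by (unfold p2, P; fold a C s G; replace (INR 2) with 2 by (simpl; ring); reflexivity).
    clearbody p0 p1 p2 p3.
    set (m0 := M (a-1) s). set (m1 := M (a-1+1) s). set (m2 := M (a-1+2) s). set (m3 := M (a-1+3) s).
    assert (Hm0 : 0 < m0) by (apply M_pos; lra).
    assert (Hm1 : 0 < m1) by (apply M_pos; lra).
    assert (Hm2 : 0 < m2) by (apply M_pos; lra).
    assert (cs0 : m1^2 < m0 * m2) by (apply M_cs; lra).
    assert (cs1 : m2^2 < m1 * m3).
    { unfold m1, m2, m3. replace (a-1+2) with (a-1+1+1) by ring. replace (a-1+3) with (a-1+1+2) by ring.
      apply M_cs; lra. }
    assert (ib0 : a * m0 = m2 - s * m1).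
    { unfold m0, m1, m2. replace (a-1+1) with a by ring. replace (a-1+2) with (a+1) by ring.
      apply M_ibp; auto. }
    assert (ib1 : (a+1) * m1 = m3 - s * m2).
    { unfold m1, m2, m3. replace (a-1+1) with (a+1-1) by ring. replace (a-1+2) with (a+1) by ring.
      replace (a-1+3) with (a+1+1) by ring. apply M_ibp; lra. }
    assert (key : a * (m0 * m2) < (a+1) * m1^2).
    { replace (a * (m0 * m2)) with ((a*m0)*m2) by ring. rewrite ib0.
      replace ((a+1) * m1^2) with (((a+1)*m1)*m1) by ring. rewrite ib1. nra. }
    fold m0 m1 m2 in Ep0, Ep1, Ep2. subst p0 p1 p2.
    apply final_alg; auto.
    - apply Rdiv_lt_0_compat; lra.
    - apply Rdiv_lt_0_compat; auto. apply Rmult_lt_0_compat; auto.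
    - apply Rdiv_lt_0_compat; auto. apply Rmult_lt_0_compat; auto. apply pow_lt; auto.
    - unfold Rdiv.
      apply Rmult_lt_reg_r with (G*G/(C*C)). apply Rdiv_lt_0_compat; nra.
      replace ((C * m1 * / G) ^ 2 * (G * G / (C * C))) with (m1^2) by (field; lra).
      replace (m0 * / G * (C ^ 2 * m2 * / G) * (G * G / (C * C))) with (m0 * m2) by (field; lra).
      auto.
    - unfold Rdiv.
      assert (Er : rho = a * kappa) by (unfold a, aa; field; lra).
      rewrite Er.
      apply Rmult_lt_reg_r with (G*G/(C*C*kappa)). apply Rdiv_lt_0_compat; [nra| apply Rmult_lt_0_compat; nra].
      replace ((a * kappa + kappa) * (C * m1 * / G) ^ 2 * (G * G / (C * C * kappa))) with ((a+1)*m1^2) by (field; lra).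
      replace (a * kappa * (m0 * / G * (C ^ 2 * m2 * / G)) * (G * G / (C * C * kappa))) with (a * (m0 * m2)) by (field; lra).
      auto. }
  destruct Main as [M1 M2]. split; auto. split; auto.
  intros F a b Hab HF HD.
  specialize (HD ybar Hab). rewrite HF in HD. apply is_derive_unique in HD. rewrite HD. auto.
Qed.
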